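(* For every $\rho\in(0,1)$ there exists an instance of the service-chain computing network model (a network $\mathcal{G}$, applications with single-task chains, increasing convex continuously differentiable cost functions $D_{ij}$, $C_i$, and input rates $\boldsymbol{r}$) together with a feasible strategy $\boldsymbol{\phi}\in\mathcal{D}_{\boldsymbol{\phi}}(\boldsymbol{r})$ that satisfies the KKT condition $$\frac{\partial T}{\partial \phi_{ij}(a,k)} \begin{cases} = \min_{j'\in\{0\}\cup\mathcal{V}} \frac{\partial T}{\partial \phi_{ij'}(a,k)}, & \text{if } \phi_{ij}(a,k)>0,\\ \geq \min_{j'\in\{0\}\cup\mathcal{V}} \frac{\partial T}{\partial \phi_{ij'}(a,k)}, & \text{if } \phi_{ij}(a,k)=0\end{cases}$$ for all $i,j,(a,k)$, such that $T(\boldsymbol{\phi}^* )/T(\boldsymbol{\phi})=\rho$, where $\boldsymbol{\phi}^*$ is a global optimal solution of $\min_{\boldsymbol{\phi}\in\mathcal{D}_{\boldsymbol{\phi}}(\boldsymbol{r})}T(\boldsymbol{\phi})$.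
   Context: Service-chain computing network model. $\mathcal{G}=(\mathcal{V},\mathcal{E})$ is a directed, strongly connected graph whose links are bidirectional ($(i,j)\in\mathcal{E}\Rightarrow(j,i)\in\mathcal{E}$). $\mathcal{A}$ is a finite set of applications; application $a$ has a destination $d_a\in\mathcal{V}$ and a chain of $|\mathcal{T}_a|$ tasks performed in order. The set of stages is $\mathcal{S}=\{(a,k): a\in\mathcal{A}, k=0,1,\dots,|\mathcal{T}_a|\}$; stage $(a,k)$ denotes packets that have completed the first $k$ tasks of $a$, and has packet size $L_{(a,k)}>0$. Exogenous input rates are $r_i(a)\ge 0$ (stage $(a,0)$ packets injected at node $i$), $\boldsymbol{r}=[r_i(a)]$. The forwarding strategy $\boldsymbol{\phi}=[\phi_{ij}(a,k)]_{(a,k)\in\mathcal{S},i\in\mathcal{V},j\in\{0\}\cup\mathcal{V}}$ has $\phi_{ij}(a,k)\in[0,1]$; for $j\in\mathcal{V}$ it is the fraction of node $i$'s stage-$(a,k)$ traffic sent to node $j$ (with $\phi_{ij}(a,k)=0$ if $(i,j)\notin\mathcal{E}$), and $\phi_{i0}(a,k)$ is the fraction sent to $i$'s local processor, which converts each stage-$(a,k)$ packet into one stage-$(a,k+1)$ packet; $\phi_{i0}(a,|\mathcal{T}_a|)=0$. Flow conservation: $\sum_{j\in\{0\}\cup\mathcal{V}}\phi_{ij}(a,k)=0$ if $k=|\mathcal{T}_a|$ and $i=d_a$, and $=1$ otherwise. Traffic $t_i(a,k)$ satisfies $t_i(a,0)=\sum_{j\in\mathcal{V}}t_j(a,0)\phi_{ji}(a,0)+r_i(a)$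 and, for $k\ge1$, $t_i(a,k)=\sum_{j\in\mathcal{V}}t_j(a,k)\phi_{ji}(a,k)+t_i(a,k-1)\phi_{i0}(a,k-1)$. Link flows $f_{ij}(a,k)=t_i(a,k)\phi_{ij}(a,k)$, processor inputs $g_i(a,k)=t_i(a,k)\phi_{i0}(a,k)$, total link flow $F_{ij}=\sum_{(a,k)\in\mathcal{S}}L_{(a,k)}f_{ij}(a,k)$, computation workload $G_i=\sum_{(a,k)\in\mathcal{S}}w_i(a,k)g_i(a,k)$ with weights $w_i(a,k)>0$. Link costs $D_{ij}(\cdot)$ and computation costs $C_i(\cdot)$ are increasing, continuously differentiable, convex functions (possibly taking value $+\infty$ outside a domain). Total cost $T(\boldsymbol{\phi})=\sum_{(i,j)\in\mathcal{E}}D_{ij}(F_{ij})+\sum_{i\in\mathcal{V}}C_i(G_i)$. The feasible set $\mathcal{D}_{\boldsymbol{\phi}}(\boldsymbol{r})$ consists of $\boldsymbol{\phi}$ satisfying flow conservation with all $D_{ij}(F_{ij})<\infty$ and $C_i(G_i)<\infty$. Marginal quantities: $\partial T/\partial t_i(a,k)$ is the marginal total cost of an additional exogenous injection of stage-$(a,k)$ traffic at node $i$ (with $\boldsymbol{\phi}$ fixed); it satisfies $\partial T/\partial t_{d_a}(a,|\mathcal{T}_a|)=0$, for $k=|\mathcal{T}_a|$: $\frac{\partial T}{\partial t_i(a,k)}=\sum_{j\in\mathcal{V}}\phi_{ij}(a,k)\big(L_{(a,k)}D'_{ij}(F_{ij})+\frac{\partial T}{\partial t_j(a,k)}\big)$,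 and for $k<|\mathcal{T}_a|$: $\frac{\partial T}{\partial t_i(a,k)}=\phi_{i0}(a,k)\big(w_i(a,k)C'_i(G_i)+\frac{\partial T}{\partial t_i(a,k+1)}\big)+\sum_{j\in\mathcal{V}}\phi_{ij}(a,k)\big(L_{(a,k)}D'_{ij}(F_{ij})+\frac{\partial T}{\partial t_j(a,k)}\big)$. The partial derivatives of $T$ are $\frac{\partial T}{\partial\phi_{ij}(a,k)}=t_i(a,k)\big(L_{(a,k)}D'_{ij}(F_{ij})+\frac{\partial T}{\partial t_j(a,k)}\big)$ for $(i,j)\in\mathcal{E}$, $\frac{\partial T}{\partial\phi_{i0}(a,k)}=t_i(a,k)\big(w_i(a,k)C'_i(G_i)+\frac{\partial T}{\partial t_i(a,k+1)}\big)$ for $k<|\mathcal{T}_a|$, and by convention $\partial T/\partial\phi_{ij}(a,k)=\infty$ for $(i,j)\notin\mathcal{E}$ and $\partial T/\partial\phi_{i0}(a,|\mathcal{T}_a|)=\infty$. *)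

(* Defs.v *)
From HB Require Import structures.
From mathcomp Require Import all_boot all_order all_algebra.
From mathcomp Require Import all_classical all_reals all_analysis.
Set Implicit Arguments. Unset Strict Implicit. Unset Printing Implicit Defensive.
Import Order.TTheory GRing.Theory Num.Theory.
Import numFieldNormedType.Exports.
Local Open Scope ring_scope.

(* A stage (a,k) is encoded by a : A and k : nat with k <= tlen a.
   The processor index "0" of the paper is encoded as [None : option V],
   node j is encoded as [Some j]. *)
Record network (R : realType) (V A : finType) := Network {
  edge  : rel V;
  dest  : A -> V;
  tlen  : A -> nat;
  psize : A -> nat -> R;
  wgt   : V -> A -> nat -> R;
  Dcost : V -> V -> R -> R;
  Ccost : V -> R -> R;
  rate  : V -> A -> R
}.

Section Model.
Variables (R : realType) (V A : finType) (N : network R V A).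

Definition cost_fun (f : R -> R) : Prop :=
  (forall x y, x < y -> f x < f y) /\
  (forall x y (l : R), 0 <= l <= 1 ->
      f (l * x + (1 - l) * y) <= l * f x + (1 - l) * f y) /\
  (forall x, derivable f x 1) /\
  continuous (derive1 f).

Definition wf_network : Prop :=
  (forall i j, edge N i j -> edge N j i) /\
  (forall i j, connect (edge N) i j) /\
  (forall a k, (k <= tlen N a)%N -> 0 < psize N a k) /\
  (forall i a k, (k <= tlen N a)%N -> 0 < wgt N i a k) /\
  (forall i a, 0 <= rate N i a) /\
  (forall i j, edge N i j -> cost_fun (Dcost N i j)) /\
  (forall i, cost_fun (Ccost N i)).

Definition strategy := A -> nat -> V -> option V -> R.
Definition nodefun := V -> A -> nat -> R.

(* flow conservation (the feasible set D_phi(r); all costs are finite-valued) *)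
Definition feasible (phi : strategy) : Prop :=
  (forall a k i j, (k <= tlen N a)%N -> 0 <= phi a k i j <= 1) /\
  (forall a k i j, (k <= tlen N a)%N -> ~~ edge N i j -> phi a k i (Some j) = 0) /\
  (forall a i, phi a (tlen N a) i None = 0) /\
  (forall a k i, (k <= tlen N a)%N ->
     \sum_(j : option V) phi a k i j =
       if (k == tlen N a) && (i == dest N a) then 0 else 1).

Definition traffic_sol (phi : strategy) (t : nodefun) : Prop :=
  (forall i a k, (k <= tlen N a)%N -> 0 <= t i a k) /\
  (forall i a, t i a 0%N = \sum_(j : V) t j a 0%N * phi a 0%N j (Some i) + rate N i a) /\
  (forall i a k, (k.+1 <= tlen N a)%N ->
     t i a k.+1 = \sum_(j : V) t j a k.+1 * phi a k.+1 j (Some i)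
                  + t i a k * phi a k i None).

Definition traffic_unique (phi : strategy) (t : nodefun) : Prop :=
  forall t', traffic_sol phi t' ->
    forall i a k, (k <= tlen N a)%N -> t' i a k = t i a k.

Definition Fflow (phi : strategy) (t : nodefun) (i j : V) : R :=
  \sum_(a : A) \sum_(k < (tlen N a).+1) psize N a k * (t i a k * phi a k i (Some j)).

Definition Gload (phi : strategy) (t : nodefun) (i : V) : R :=
  \sum_(a : A) \sum_(k < (tlen N a).+1) wgt N i a k * (t i a k * phi a k i None).

Definition totalcost (phi : strategy) (t : nodefun) : R :=
  \sum_(i : V) \sum_(j : V | edge N i j) Dcost N i j (Fflow phi t i j)
  + \sum_(i : V) Ccost N i (Gload phi t i).

(* m i a k = dT/dt_i(a,k): solution of the marginal-cost equations *)
Definition marginal_sol (phi : strategy) (t : nodefun) (m : nodefun) : Prop :=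
  (forall a, m (dest N a) a (tlen N a) = 0) /\
  (forall i a, m i a (tlen N a) =
     \sum_(j : V) phi a (tlen N a) i (Some j) *
        (psize N a (tlen N a) * derive1 (Dcost N i j) (Fflow phi t i j) + m j a (tlen N a))) /\
  (forall i a k, (k < tlen N a)%N ->
     m i a k =
       phi a k i None * (wgt N i a k * derive1 (Ccost N i) (Gload phi t i) + m i a k.+1)
     + \sum_(j : V) phi a k i (Some j) *
        (psize N a k * derive1 (Dcost N i j) (Fflow phi t i j) + m j a k)).

Definition marginal_unique (phi : strategy) (t : nodefun) (m : nodefun) : Prop :=
  forall m', marginal_sol phi t m' ->
    forall i a k, (k <= tlen N a)%N -> m' i a k = m i a k.

(* dT/dphi_ij(a,k), with value +oo by convention for non-edges and for the
   processor at the last stage *)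
Definition dTdphi (phi : strategy) (t m : nodefun) (a : A) (k : nat) (i : V)
    (j : option V) : \bar R :=
  match j with
  | Some j => if edge N i j then
                (t i a k * (psize N a k * derive1 (Dcost N i j) (Fflow phi t i j) + m j a k))%:E
              else +oo%E
  | None => if (k < tlen N a)%N then
              (t i a k * (wgt N i a k * derive1 (Ccost N i) (Gload phi t i) + m i a k.+1))%:E
            else +oo%E
  end.

Definition KKT (phi : strategy) (t m : nodefun) : Prop :=
  forall a k i (j : option V), (k <= tlen N a)%N ->
    let mn := \big[Order.min/+oo%E]_(j' : option V) dTdphi phi t m a k i j' in
    (0 < phi a k i j -> dTdphi phi t m a k i j = mn) /\
    (phi a k i j = 0 -> (mn <= dTdphi phi t m a k i j)%E).

Definition global_opt (phistar : strategy) (tstar : nodefun) : Prop :=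
  feasible phistar /\ traffic_sol phistar tstar /\
  forall phi' t', feasible phi' -> traffic_sol phi' t' ->
    totalcost phistar tstar <= totalcost phi' t'.

End Model.

(* Main.v *)
Require Import Defs.
From HB Require Import structures.
From mathcomp Require Import all_boot all_order all_algebra.
From mathcomp Require Import all_classical all_reals all_analysis.
From mathcomp Require Import ring lra.
Import Order.TTheory GRing.Theory Num.Theory.
Local Open Scope ring_scope.

Lemma der_lin (R : realType) (c x : R) : derive1 (fun z => c * z) x = c.
Proof.
have := @derive1Ml R id x c (@derivable_id _ _ _ _). by rewrite derive1_id mulr1.
Qed.
Lemma dvb_lin (R : realType) (c x : R) : derivable (fun z => c * z) x 1.
Proof.
have -> : (fun z => c * z) = (fun _ => c) * id by apply: funext => z.
apply: derivableM => //.
Qed.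
Lemma cost_lin (R : realType) (c : R) : 0 < c -> cost_fun (fun z => c * z).
Proof.
move=> c0; split; [|split; [|split]].
- by move=> x y xy; rewrite ltr_pM2l.
- move=> x y l _. have -> : c * (l * x + (1 - l) * y) = l * (c * x) + (1 - l) * (c * y) by ring.
  by [].
- by move=> x; apply: dvb_lin.
- have -> : derive1 (fun z => c * z) = (fun _ => c) by apply: funext => x; rewrite der_lin.
  by move=> x; apply: cvg_cst.
Qed.

Lemma sum_optb (R : realType) (F : option bool -> R) :
  \sum_(j : option bool) F j = F None + (F (Some true) + F (Some false)).
Proof. rewrite unlock /index_enum /= !unlock /= !unlock /= addr0. done. Qed.
Lemma sum_unit (R : realType) (F : unit -> R) :
  \sum_(j : unit) F j = F tt.
Proof. by rewrite unlock /index_enum /= !unlock /= addr0. Qed.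
Lemma sum_ord2 (R : realType) (F : 'I_2 -> R) :
  \sum_(k < 2) F k = F ord0 + F ord_max.
Proof. rewrite big_ord_recr big_ord1 /=. congr (F _ + F _); exact: val_inj. Qed.

Definition netK {R : realType} (K : R) : network R bool unit :=
  @Network R bool unit (fun i j : bool => i != j) (fun _ => false) (fun _ => 1%N)
    (fun _ _ => 1) (fun _ _ _ => 1) (fun _ _ z => 1 * z)
    (fun i z => (if i then K else 1) * z) (fun i _ => if i then 1 else 0).

Definition phiB {R : realType} : strategy R bool unit := fun _ k i j =>
  match k, i, j with
  | 0%N, true, None => 1
  | 0%N, false, Some true => 1
  | 1%N, true, Some false => 1
  | _, _, _ => 0 end.
Definition phiS {R : realType} : strategy R bool unit := fun _ k i j =>
  match k, i, j with
  | 0%N, true, Some false => 1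
  | 0%N, false, None => 1
  | 1%N, true, Some false => 1
  | _, _, _ => 0 end.
Definition tB {R : realType} : nodefun R bool unit := fun i _ k =>
  match k, i with 0%N, false => 0 | _, _ => 1 end.
Definition tS {R : realType} : nodefun R bool unit := fun i _ k =>
  match k, i with 1%N, true => 0 | _, _ => 1 end.
Definition mB {R : realType} (K : R) : nodefun R bool unit := fun i _ k =>
  match k, i with 0%N, true => K + 1 | 0%N, false => K + 2
  | 1%N, true => 1 | _, _ => 0 end.

Lemma tcB (R : realType) (K : R) : totalcost (netK K) phiB tB = 1 + K.
Proof.
rewrite /totalcost /Fflow /Gload /= !big_bool /= !big_mkcond /= !big_bool /=.
rewrite (big_mkcond (fun j => false != j)) /= ?big_bool /= !sum_unit !sum_ord2 /=. lra.
Qed.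

Lemma tcS (R : realType) (K : R) : totalcost (netK K) phiS tS = 2.
Proof.
rewrite /totalcost /Fflow /Gload /= !big_bool /= !big_mkcond /= !big_bool /=.
rewrite (big_mkcond (fun j => false != j)) /= ?big_bool /= !sum_unit !sum_ord2 /=. lra.
Qed.

Lemma kktB (R : realType) (K : R) : 1 < K -> KKT (netK K) phiB tB (mB K).
Proof.
move=> K1.
  move=> [] k i j Hk.
  move: k Hk => [|[|k]] // _; case: i; case: j => [[]|]; cbv zeta;
    (split; [move=> Hpos | move=> _; exact: bigmin_le]);
    try (by move: Hpos; rewrite /= ltxx).
  all: apply: (@le_anti _ (\bar R)); apply/andP; split; [|exact: bigmin_le].
  all: apply: le_bigmin => [|j' _]; first by rewrite /dTdphi /= leey.
  all: case: j' => [[]|]; rewrite /dTdphi /= ?der_lin ?leey ?lee_fin //; lra.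
Qed.

Lemma optS (R : realType) (K : R) : 1 < K -> forall phi' t',
  feasible (netK K) phi' -> traffic_sol (netK K) phi' t' -> 2 <= totalcost (netK K) phi' t'.
Proof.
move=> K1 phi' t' [F1 [F2 [F3 F4]]] [T1 [T2 T3]].
rewrite /totalcost /Fflow /Gload /= !big_bool /= !big_mkcond /= !big_bool /=.
rewrite (big_mkcond (fun j => false != j)) /= ?big_bool /= !sum_unit !sum_ord2 /=.
have x0 := T2 true tt; have y0 := T2 false tt; have x1 := T3 true tt 0%N isT.
move: x0 y0 x1; rewrite !big_bool /= => x0 y0 x1.
have S0t := F4 tt 0%N true isT; have S0f := F4 tt 0%N false isT.
have S1t := F4 tt 1%N true isT; have S1f := F4 tt 1%N false isT.
move: S0t S0f S1t S1f; rewrite !sum_optb /= => S0t S0f S1t S1f.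
have z0t := F2 tt 0%N true true isT isT; have z0f := F2 tt 0%N false false isT isT.
have z1t := F2 tt 1%N true true isT isT; have z1f := F2 tt 1%N false false isT isT.
have n1t := F3 tt true; have n1f := F3 tt false.
rewrite /= in z0t z0f z1t z1f n1t n1f.
rewrite z0t z0f z1t z1f n1t n1f in x0 y0 x1 S0t S0f S1t S1f *.
have [pa pb] := andP (F1 tt 1%N false (Some true) isT).
have [pc pd] := andP (F1 tt 1%N false None isT).
have [pe pf] := andP (F1 tt 1%N false (Some false) isT).
have u1 : phi' tt 1%N false (Some true) = 0 by lra.
rewrite u1 in x1 *.
set X0 := t' true tt 0%N in x0 y0 x1 *; set Y0 := t' false tt 0%N in x0 y0 x1 *.
set X1 := t' true tt 1%N in x0 y0 x1 *; set Y1 := t' false tt 1%N in x0 y0 x1 *.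
set p := phi' tt 0%N true (Some false) in x0 y0 x1 S0t *.
set q := phi' tt 0%N true None in x0 y0 x1 S0t *.
set u := phi' tt 0%N false (Some true) in x0 y0 x1 S0f *.
set v := phi' tt 0%N false None in x0 y0 x1 S0f *.
have X0g : 0 <= X0 by apply: T1.
have Y0g : 0 <= Y0 by apply: T1.
have [qg _] := andP (F1 tt 0%N true None isT).
have [ug _] := andP (F1 tt 0%N false (Some true) isT).
have e1 : X0 * q + X0 * p = X0 by rewrite -mulrDr (_ : q + p = 1) ?mulr1 //; lra.
have e2 : Y0 * v + Y0 * u = Y0 by rewrite -mulrDr (_ : v + u = 1) ?mulr1 //; lra.
have Yu : 0 <= Y0 * u by apply: mulr_ge0.
have Xq : 0 <= X0 * q by apply: mulr_ge0.
have KXq : X0 * q <= K * (X0 * q) by rewrite ler_peMl //; lra.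
have p1 : phi' tt 1%N true (Some false) = 1 by lra.
rewrite p1; lra.
Qed.

Lemma main_K (R : realType) (K : R) : 1 < K ->
  exists (V A : finType) (N : network R V A),
    wf_network N /\ (forall a, tlen N a = 1%N) /\
    exists (phi : strategy R V A) (t m : nodefun R V A),
      feasible N phi /\ traffic_sol N phi t /\ traffic_unique N phi t /\
      marginal_sol N phi t m /\ marginal_unique N phi t m /\
      KKT N phi t m /\
      exists (phistar : strategy R V A) (tstar : nodefun R V A),
        global_opt N phistar tstar /\
        totalcost N phistar tstar / totalcost N phi t = 2 / (1 + K).
Proof.
move=> K1.
have K0 : 0 < K by lra.
exists bool, unit, (netK K).
split.
  split; first by move=> i j /=; rewrite eq_sym.
  split; first by move=> [] [] //= ; rewrite ?connect0 //; apply: connect1.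
  split; first by move=> *; apply: ltr01.
  split; first by move=> *; apply: ltr01.
  split; first by move=> [] _ /=; lra.
  split; first by move=> i j _; apply: cost_lin; apply: ltr01.
  by move=> [] /=; apply: cost_lin => //; apply: ltr01.
split; first by [].
exists phiB, tB, (mB K).
split.
  split; first by move=> a [|[|k]] [] [[]|] //= _; lra.
  split; first by move=> a [|[|k]] [] [] //=.
  split; first by move=> a [].
  by move=> a [|[|k]] [] //= _; rewrite sum_optb /=; lra.
split.
  split; first by move=> [] a [|[|k]] //= _; lra.
  split; first by move=> [] a; rewrite big_bool /=; lra.
  by move=> [] a [|k] //= _; rewrite big_bool /=; lra.
split.
  move=> t' [_ [H2 H3]] i [] k Hk.
  have y0 := H2 false tt; have x0 := H2 true tt.
  have x1 := H3 true tt 0%N isT; have y1 := H3 false tt 0%N isT.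
  move: y0 x0 x1 y1; rewrite !big_bool /= => y0 x0 x1 y1.
  by move: k Hk => [|[|k]] // _; case: i => /=; lra.
split.
  split; first by [].
  split.
    move=> [] [] /=; rewrite big_bool /= ?der_lin; lra.
  move=> [] [] [|k] //= _; rewrite big_bool /= ?der_lin; lra.
split.
  move=> m' [M1 [M2 M3]] i [] k Hk.
  have y1 := M1 tt; have x1 := M2 true tt.
  have x0 := M3 true tt 0%N isT; have y0 := M3 false tt 0%N isT.
  move: y1 x1 x0 y0; rewrite /= !big_bool /= ?der_lin => y1 x1 x0 y0.
  by move: k Hk => [|[|k]] // _; case: i => /=; lra.
split; first exact: kktB.
exists phiS, tS.
split.
  split.
    split; first by move=> a [|[|k]] [] [[]|] //= _; lra.
    split; first by move=> a [|[|k]] [] [] //=.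
    split; first by move=> a [].
    by move=> a [|[|k]] [] //= _; rewrite sum_optb /=; lra.
  split.
    split; first by move=> [] a [|[|k]] //= _; lra.
    split; first by move=> [] a; rewrite big_bool /=; lra.
    by move=> [] a [|k] //= _; rewrite big_bool /=; lra.
  move=> phi' t' [F1 [F2 [F3 F4]]] [T1 [T2 T3]].
  by rewrite tcS; apply: optS.
by rewrite tcS tcB.
Qed.

Theorem proposition1 (R : realType) (rho : R) :
  0 < rho < 1 ->
  exists (V A : finType) (N : network R V A),
    wf_network N /\ (forall a, tlen N a = 1%N) /\
    exists (phi : strategy R V A) (t m : nodefun R V A),
      feasible N phi /\ traffic_sol N phi t /\ traffic_unique N phi t /\
      marginal_sol N phi t m /\ marginal_unique N phi t m /\
      KKT N phi t m /\
      exists (phistar : strategy R V A) (tstar : nodefun R V A),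
        global_opt N phistar tstar /\
        totalcost N phistar tstar / totalcost N phi t = rho.
Proof.
move=> /andP[r0 r1].
have h2 : 2 < 2 / rho by rewrite ltr_pdivlMr //; lra.
have := @main_K R (2 / rho - 1) ltac:(lra).
have -> : 2 / (1 + (2 / rho - 1)) = rho.
  have rn : rho != 0 by rewrite gt_eqF.
  rewrite (_ : 1 + (2 / rho - 1) = 2 / rho); last by ring.
  by field.
done.
Qed.
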